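(* There is a set $S$ and a scenario $f\in{}^{\mathbb{R}}S$ such that for every $T_3$-anonymous predictor $P:{}^{\mathbb{R}}S\to{}^{\mathbb{R}}S$, the set $\{x\in\mathbb{R}: P(f)(x)=f(x)\}$ is countable.
   Context: For a set $S$, ${}^{\mathbb{R}}S$ is the set of all functions (scenarios) $f:\mathbb{R}\to S$. A predictor is a function $P:{}^{\mathbb{R}}S\to{}^{\mathbb{R}}S$ such that for all $f,g\in{}^{\mathbb{R}}S$ and $x\in\mathbb{R}$, if $f\upharpoonright(-\infty,x)=g\upharpoonright(-\infty,x)$ then $P(f)(x)=P(g)(x)$. For a family $T$ of functions $\mathbb{R}\to\mathbb{R}$, $P$ is $T$-anonymous if $P(f\circ t)=P(f)\circ t$ for all scenarios $f$ and all $t\in T$. $T_3$ is the set of all infinitely differentiable strictly increasing bijections $\mathbb{R}\to\mathbb{R}$. *)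

(* Defs.v *)
From Stdlib Require Export Reals.
Open Scope R_scope.

Definition predictor {S : Type} (P : (R -> S) -> (R -> S)) : Prop :=
  forall (f g : R -> S) (x : R),
    (forall y : R, y < x -> f y = g y) -> P f x = P g x.

Definition smooth (t : R -> R) : Prop :=
  exists D : nat -> R -> R,
    D O = t /\ forall (n : nat) (x : R), derivable_pt_lim (D n) x (D (S n) x).

Definition strictly_increasing (t : R -> R) : Prop :=
  forall x y : R, x < y -> t x < t y.

Definition bijective_RR (t : R -> R) : Prop :=
  (forall x y : R, t x = t y -> x = y) /\ (forall y : R, exists x : R, t x = y).

Definition T3 (t : R -> R) : Prop :=
  smooth t /\ strictly_increasing t /\ bijective_RR t.

Definition anonymous {S : Type} (T : (R -> R) -> Prop)
    (P : (R -> S) -> (R -> S)) : Prop :=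
  forall (f : R -> S) (t : R -> R),
    T t -> P (fun x => f (t x)) = (fun x => P f (t x)).

Definition countable_set (A : R -> Prop) : Prop :=
  exists g : R -> nat, forall x y : R, A x -> A y -> g x = g y -> x = y.

(* Main.v *)
Require Import Defs.
From Stdlib Require Import ZArith List Cantor Reals Lra Lia Psatz ClassicalEpsilon FunctionalExtensionality PropExtensionality Classical.
From Coquelicot Require Import Coquelicot.
Open Scope R_scope.

Definition Cn (n : nat) (f : R -> R) : Prop :=
  exists D : nat -> R -> R, D O = f /\
    forall k, (k < n)%nat -> forall x, derivable_pt_lim (D k) x (D (S k) x).

Lemma Cn_0 f : Cn 0 f.
Proof. exists (fun _ => f). split; [reflexivity| intros; lia]. Qed.

Lemma Cn_step n f f' : (forall x, derivable_pt_lim f x (f' x)) -> Cn n f' -> Cn (S n) f.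
Proof.
  intros Hd [D [H0 HD]].
  exists (fun k => match k with O => f | S k => D k end). split; [reflexivity|].
  intros [|k] Hk x; simpl.
  - rewrite H0. apply Hd.
  - apply HD. lia.
Qed.

Lemma Cn_inv_step n f : Cn (S n) f ->
  exists f', (forall x, derivable_pt_lim f x (f' x)) /\ Cn n f'.
Proof.
  intros [D [H0 HD]]. exists (D 1%nat). split.
  - intros x. rewrite <- H0. apply HD. lia.
  - exists (fun k => D (S k)). split; [reflexivity|]. intros k Hk x. apply HD. lia.
Qed.

Lemma Cn_mono n f : Cn (S n) f -> Cn n f.
Proof. intros [D [H0 HD]]. exists D. split; [auto|]. intros; apply HD; lia. Qed.

Lemma dpl_val f x l l' : derivable_pt_lim f x l -> l = l' -> derivable_pt_lim f x l'.
Proof. intros H ->. exact H. Qed.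

Lemma dpl_plus f g x l1 l2 : derivable_pt_lim f x l1 -> derivable_pt_lim g x l2 ->
  derivable_pt_lim (fun y => f y + g y) x (l1 + l2).
Proof. intros. apply (derivable_pt_lim_plus f g); auto. Qed.

Lemma dpl_mult f g x l1 l2 : derivable_pt_lim f x l1 -> derivable_pt_lim g x l2 ->
  derivable_pt_lim (fun y => f y * g y) x (l1 * g x + f x * l2).
Proof. intros. apply (derivable_pt_lim_mult f g); auto. Qed.

Lemma dpl_scal c f x l : derivable_pt_lim f x l ->
  derivable_pt_lim (fun y => c * f y) x (c * l).
Proof. intros. apply (derivable_pt_lim_scal f c); auto. Qed.

Lemma dpl_const c x : derivable_pt_lim (fun _ => c) x 0.
Proof. apply (derivable_pt_lim_const c). Qed.

Lemma dpl_id x : derivable_pt_lim (fun y => y) x 1.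
Proof. apply derivable_pt_lim_id. Qed.

Lemma dpl_comp f g x l1 l2 : derivable_pt_lim g x l1 -> derivable_pt_lim f (g x) l2 ->
  derivable_pt_lim (fun y => f (g y)) x (l2 * l1).
Proof. intros. apply (derivable_pt_lim_comp g f); auto. Qed.

Lemma dpl_inv g x l : derivable_pt_lim g x l -> g x <> 0 ->
  derivable_pt_lim (fun y => / g y) x (- l / (g x) ^ 2).
Proof.
  intros H Hg. apply is_derive_Reals. apply is_derive_inv; auto.
  apply is_derive_Reals. exact H.
Qed.

Lemma Cn_ext n f g : (forall x, f x = g x) -> Cn n f -> Cn n g.
Proof. intros H. replace g with f; auto. apply functional_extensionality; auto. Qed.

Lemma Cn_plus n : forall f g, Cn n f -> Cn n g -> Cn n (fun x => f x + g x).
Proof.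
  induction n; intros f g Hf Hg. apply Cn_0.
  destruct (Cn_inv_step _ _ Hf) as [f' [Df Cf]].
  destruct (Cn_inv_step _ _ Hg) as [g' [Dg Cg]].
  apply Cn_step with (fun x => f' x + g' x).
  - intros x. apply dpl_plus; auto.
  - apply IHn; auto.
Qed.

Lemma Cn_scal n : forall c f, Cn n f -> Cn n (fun x => c * f x).
Proof.
  induction n; intros c f Hf. apply Cn_0.
  destruct (Cn_inv_step _ _ Hf) as [f' [Df Cf]].
  apply Cn_step with (fun x => c * f' x).
  - intros x. apply dpl_scal; auto.
  - apply IHn; auto.
Qed.

Lemma Cn_mult n : forall f g, Cn n f -> Cn n g -> Cn n (fun x => f x * g x).
Proof.
  induction n; intros f g Hf Hg. apply Cn_0.
  destruct (Cn_inv_step _ _ Hf) as [f' [Df Cf]].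
  destruct (Cn_inv_step _ _ Hg) as [g' [Dg Cg]].
  apply Cn_step with (fun x => f' x * g x + f x * g' x).
  - intros x. apply dpl_mult; auto.
  - apply Cn_plus; apply IHn; auto; apply Cn_mono; auto.
Qed.

Lemma Cn_inv n : forall g, (forall x, g x <> 0) -> Cn n g -> Cn n (fun x => / g x).
Proof.
  induction n; intros g Hg0 Hg. apply Cn_0.
  destruct (Cn_inv_step _ _ Hg) as [g' [Dg Cg]].
  apply Cn_step with (fun x => (-1 * g' x) * (/ g x * / g x)).
  - intros x. eapply dpl_val. apply dpl_inv; auto. field. auto.
  - apply Cn_mult. apply Cn_scal; auto. apply Cn_mult; apply IHn; auto; apply Cn_mono; auto.
Qed.

Lemma Cn_affine n : forall a b f, Cn n f -> Cn n (fun x => f (a * x + b)).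
Proof.
  induction n; intros a b f Hf. apply Cn_0.
  destruct (Cn_inv_step _ _ Hf) as [f' [Df Cf]].
  apply Cn_step with (fun x => a * f' (a * x + b)).
  - intros x. eapply dpl_val. apply dpl_comp with (l1 := a). 2: apply Df.
    eapply dpl_val. apply dpl_plus. apply dpl_scal. apply dpl_id. apply dpl_const. ring.
    ring.
  - apply Cn_scal. apply IHn; auto.
Qed.

Lemma Cn_const n : forall c, Cn n (fun _ => c).
Proof.
  induction n; intros c. apply Cn_0.
  apply Cn_step with (fun _ => 0). intros; apply dpl_const. apply IHn.
Qed.

Lemma Cn_all f : (forall n, Cn n f) -> smooth f.
Proof.
  intros H.
  assert (HD : forall n, {D : nat -> R -> R | D O = f /\
    forall k, (k < n)%nat -> forall x, derivable_pt_lim (D k) x (D (S k) x)}).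
  { intros n. apply constructive_indefinite_description. apply H. }
  set (Dn := fun n => proj1_sig (HD n)).
  assert (HD0 : forall n, Dn n O = f). { intros n. exact (proj1 (proj2_sig (HD n))). }
  assert (HDd : forall n k, (k < n)%nat -> forall x, derivable_pt_lim (Dn n k) x (Dn n (S k) x)).
  { intros n. exact (proj2 (proj2_sig (HD n))). }
  clearbody Dn.
  assert (Hagree : forall k n1 n2, (k <= n1)%nat -> (k <= n2)%nat -> Dn n1 k = Dn n2 k).
  { induction k; intros n1 n2 H1 H2.
    - rewrite !HD0. reflexivity.
    - apply functional_extensionality. intros x.
      assert (IH := IHk n1 n2 ltac:(lia) ltac:(lia)).
      apply uniqueness_limite with (f := Dn n1 k) (x := x).
      + apply HDd; lia.
      + rewrite IH. apply HDd; lia. }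
  exists (fun k => Dn (S k) k). split.
  - apply HD0.
  - intros n x.
    rewrite (Hagree n (S n) (S (S n))) by lia.
    apply HDd; lia.
Qed.

Lemma exp_pow_INR m s : exp s ^ m = exp (INR m * s).
Proof.
  induction m; simpl pow. rewrite Rmult_0_l, exp_0; reflexivity.
  rewrite IHm, <- exp_plus, S_INR. f_equal; ring.
Qed.

Lemma exp_ge_id s : 0 <= s -> s <= exp s.
Proof.
  intros Hs. destruct (Req_dec s 0) as [->|Hn]. rewrite exp_0; lra.
  pose proof (exp_ineq1 s Hn). lra.
Qed.

Lemma key_exp j t : 0 < t -> t ^ j * exp (- t) <= INR (S j) ^ (S j) / t.
Proof.
  intros Ht.
  set (q := INR (S j)).
  assert (Hq : 0 < q) by (unfold q; apply lt_0_INR; lia).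
  assert (He : exp t = exp (t / q) ^ (S j)).
  { rewrite exp_pow_INR. f_equal. fold q. field. lra. }
  assert (Hle : (t / q) ^ (S j) <= exp t).
  { assert (Htq : 0 < t / q) by (apply Rdiv_lt_0_compat; lra).
    rewrite He. apply pow_incr. split. lra.
    apply exp_ge_id. lra. }
  assert (Hpq : (t / q) ^ S j = t ^ S j / q ^ S j).
  { unfold Rdiv. rewrite Rpow_mult_distr, pow_inv. reflexivity. }
  rewrite Hpq in Hle.
  assert (Hqp : 0 < q ^ S j) by (apply pow_lt; lra).
  assert (Htp : 0 < t ^ j) by (apply pow_lt; lra).
  assert (Hexp : exp (- t) = / exp t) by (apply exp_Ropp).
  rewrite Hexp.
  assert (Het : 0 < exp t) by apply exp_pos.
  apply Rmult_le_reg_r with (exp t * t). nra.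
  replace (t ^ j * / exp t * (exp t * t)) with (t ^ S j) by (simpl; field; lra).
  replace (q ^ S j / t * (exp t * t)) with (q ^ S j * exp t) by (field; lra).
  apply Rmult_le_reg_r with (/ q ^ S j). apply Rinv_0_lt_compat; lra.
  replace (q ^ S j * exp t * / q ^ S j) with (exp t) by (field; lra).
  exact Hle.
Qed.

Definition F (k : nat) (x : R) : R :=
  if Rlt_dec 0 x then exp (- / x) * (/ x) ^ k else 0.

Lemma F_small k h : 0 < h -> F k h <= INR (S k) ^ (S k) * h.
Proof.
  intros Hh. unfold F. destruct (Rlt_dec 0 h); [|lra].
  pose proof (key_exp k (/ h) ltac:(apply Rinv_0_lt_compat; lra)) as K.
  rewrite Rmult_comm. replace (INR (S k) ^ S k * h) with (INR (S k) ^ S k / / h).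
  exact K. field; lra.
Qed.

Lemma F_nonneg k x : 0 <= F k x.
Proof.
  unfold F. destruct (Rlt_dec 0 x); [|lra].
  apply Rmult_le_pos. apply Rlt_le, exp_pos. apply pow_le. apply Rlt_le, Rinv_0_lt_compat; lra.
Qed.

Lemma dpl_local f g x l : (exists d, 0 < d /\ forall y, Rabs (y - x) < d -> f y = g y) ->
  derivable_pt_lim g x l -> derivable_pt_lim f x l.
Proof.
  intros [d [Hd Hfg]] Hg eps Heps.
  destruct (Hg eps Heps) as [del Hdel].
  assert (Hm : 0 < Rmin d del) by (apply Rmin_pos; [lra| apply cond_pos]).
  exists (mkposreal _ Hm). intros h Hh0 Hh. simpl in Hh.
  rewrite (Hfg (x + h)), (Hfg x).
  apply Hdel; auto. eapply Rlt_le_trans. apply Hh. apply Rmin_r.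
  rewrite Rminus_eq_0, Rabs_R0; lra.
  replace (x + h - x) with h by ring. eapply Rlt_le_trans. apply Hh. apply Rmin_l.
Qed.

Lemma F_deriv k x : derivable_pt_lim (F k) x (F (S (S k)) x - INR k * F (S k) x).
Proof.
  destruct (Rlt_dec 0 x) as [Hx|Hx].
  - apply dpl_local with (fun y => exp (- / y) * (/ y) ^ k).
    { exists x. split; auto. intros y Hy. unfold F. destruct (Rlt_dec 0 y); auto.
      exfalso. apply Rabs_def2 in Hy. lra. }
    unfold F. destruct (Rlt_dec 0 x); [|lra].
    apply is_derive_Reals. auto_derive. lra.
    simpl. destruct k. simpl. field. lra.
    rewrite S_INR. simpl. field. lra.
  - destruct (Rlt_dec x 0) as [Hx'|Hx'].
    + apply dpl_local with (fun _ => 0).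
      { exists (- x). split. lra. intros y Hy. unfold F. destruct (Rlt_dec 0 y); auto.
        exfalso. apply Rabs_def2 in Hy. lra. }
      unfold F. destruct (Rlt_dec 0 x); [lra|]. replace (0 - INR k * 0) with 0 by ring.
      apply dpl_const.
    + assert (x = 0) by lra. subst x.
      unfold F at 2 3. destruct (Rlt_dec 0 0); [lra|]. replace (0 - INR k * 0) with 0 by ring.
      intros eps Heps.
      set (C := INR (S (S k)) ^ (S (S k))).
      assert (HC : 0 < C) by (unfold C; apply pow_lt, lt_0_INR; lia).
      assert (Hd : 0 < eps / C) by (apply Rdiv_lt_0_compat; lra).
      exists (mkposreal _ Hd). intros h Hh0 Hh. simpl in Hh.
      rewrite Rplus_0_l.
      unfold F at 2. destruct (Rlt_dec 0 0); [lra|].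
      destruct (Rlt_dec 0 h) as [Hp|Hp].
      * assert (Fh : F k h / h = F (S k) h).
        { unfold F. destruct (Rlt_dec 0 h); [|lra]. simpl. field. lra. }
        replace ((F k h - 0) / h - 0) with (F k h / h) by (field; lra).
        rewrite Fh. pose proof (F_small (S k) h Hp). pose proof (F_nonneg (S k) h).
        rewrite Rabs_pos_eq by lra. fold C in H.
        rewrite Rabs_pos_eq in Hh by lra.
        apply Rle_lt_trans with (C * h). lra.
        apply Rmult_lt_reg_l with (/ C). apply Rinv_0_lt_compat; lra.
        replace (/ C * (C * h)) with h by (field; lra). replace (/C * eps) with (eps / C) by (unfold Rdiv; ring). lra.
      * unfold F. destruct (Rlt_dec 0 h); [lra|].
        replace ((0 - 0) / h - 0) with 0 by (field; auto). rewrite Rabs_R0; lra.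
Qed.

Inductive inK : (R -> R) -> Prop :=
| inK0 : inK (fun _ => 0)
| inKF : forall c k g, inK g -> inK (fun x => c * F k x + g x).

Lemma inK_deriv g : inK g -> exists g', inK g' /\ forall x, derivable_pt_lim g x (g' x).
Proof.
  induction 1.
  - exists (fun _ => 0). split. constructor. intros; apply dpl_const.
  - destruct IHinK as [g' [Hg' Dg']].
    exists (fun x => c * F (S (S k)) x + ((- (c * INR k)) * F (S k) x + g' x)).
    split. repeat constructor; auto.
    intros x. eapply dpl_val. apply dpl_plus. apply dpl_scal. apply F_deriv. apply Dg'.
    ring.
Qed.

Lemma inK_Cn n : forall g, inK g -> Cn n g.
Proof.
  induction n; intros g Hg. apply Cn_0.
  destruct (inK_deriv g Hg) as [g' [Hg' Dg]].
  apply Cn_step with g'; auto.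
Qed.

Definition psi (x : R) : R := F 0 x.

Lemma Cn_psi n : Cn n psi.
Proof.
  apply Cn_ext with (fun x => 1 * F 0 x + (fun _ => 0) x).
  intros; unfold psi; ring. apply inK_Cn. repeat constructor.
Qed.

Lemma psi_pos x : 0 < x -> 0 < psi x.
Proof. intros. unfold psi, F. destruct (Rlt_dec 0 x); [|lra]. simpl. rewrite Rmult_1_r. apply exp_pos. Qed.

Lemma psi_zero x : x <= 0 -> psi x = 0.
Proof. intros. unfold psi, F. destruct (Rlt_dec 0 x); lra. Qed.

Lemma psi_mono x y : x <= y -> psi x <= psi y.
Proof.
  intros Hxy. unfold psi, F. simpl.
  destruct (Rlt_dec 0 x); destruct (Rlt_dec 0 y); try lra.
  rewrite !Rmult_1_r. apply exp_le_3 || idtac.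
  destruct (Req_dec x y) as [->|Hne]. lra.
  apply Rlt_le, exp_increasing. apply Ropp_lt_contravar. apply Rinv_lt_contravar; nra.
  rewrite Rmult_1_r. apply Rlt_le, exp_pos.
Qed.

Definition sig (x : R) : R := psi x / (psi x + psi (1 - x)).

Lemma den_pos x : 0 < psi x + psi (1 - x).
Proof.
  destruct (Rlt_dec 0 x). pose proof (psi_pos x r). pose proof (F_nonneg 0 (1 - x)). unfold psi in *; lra.
  pose proof (psi_pos (1 - x) ltac:(lra)). pose proof (F_nonneg 0 x). unfold psi in *; lra.
Qed.

Lemma smooth_sig : smooth sig.
Proof.
  apply Cn_all. intros n. unfold sig.
  apply Cn_mult. apply Cn_psi. apply Cn_inv.
  intros x; pose proof (den_pos x); lra.
  apply Cn_plus. apply Cn_psi.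
  apply Cn_ext with (fun x => psi ((-1) * x + 1)). intros; f_equal; ring.
  apply Cn_affine, Cn_psi.
Qed.

Lemma sig_zero x : x <= 0 -> sig x = 0.
Proof. intros. unfold sig. rewrite psi_zero by lra. unfold Rdiv; ring. Qed.

Lemma sig_one x : 1 <= x -> sig x = 1.
Proof.
  intros. unfold sig. rewrite (psi_zero (1 - x)) by lra.
  pose proof (psi_pos x ltac:(lra)). field. lra.
Qed.

Lemma sig_bounds x : 0 <= sig x <= 1.
Proof.
  unfold sig. pose proof (den_pos x). pose proof (F_nonneg 0 x). pose proof (F_nonneg 0 (1 - x)).
  unfold psi in *. split.
  apply Rmult_le_pos; auto. apply Rlt_le, Rinv_0_lt_compat; lra.
  apply Rmult_le_reg_r with (F 0 x + F 0 (1 - x)); auto.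
  unfold Rdiv. rewrite Rmult_assoc, Rinv_l by lra. lra.
Qed.

Lemma sig_mono x y : x <= y -> sig x <= sig y.
Proof.
  intros Hxy. unfold sig.
  pose proof (den_pos x). pose proof (den_pos y).
  pose proof (psi_mono x y Hxy). pose proof (psi_mono (1 - y) (1 - x) ltac:(lra)).
  pose proof (F_nonneg 0 x). pose proof (F_nonneg 0 (1 - y)).
  unfold psi in *.
  apply Rmult_le_reg_r with ((F 0 x + F 0 (1 - x)) * (F 0 y + F 0 (1 - y))). nra.
  replace (F 0 x / (F 0 x + F 0 (1 - x)) * ((F 0 x + F 0 (1 - x)) * (F 0 y + F 0 (1 - y))))
    with (F 0 x * (F 0 y + F 0 (1 - y))) by (field; lra).
  replace (F 0 y / (F 0 y + F 0 (1 - y)) * ((F 0 x + F 0 (1 - x)) * (F 0 y + F 0 (1 - y))))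
    with (F 0 y * (F 0 x + F 0 (1 - x))) by (field; lra).
  nra.
Qed.
Definition Dsig : nat -> R -> R := proj1_sig (constructive_indefinite_description _ smooth_sig).
Lemma Dsig0 : Dsig 0 = sig.
Proof. exact (proj1 (proj2_sig (constructive_indefinite_description _ smooth_sig))). Qed.
Lemma Dsig_d n x : derivable_pt_lim (Dsig n) x (Dsig (S n) x).
Proof. exact (proj2 (proj2_sig (constructive_indefinite_description _ smooth_sig)) n x). Qed.

Lemma deriv_flat_left g t c l : (forall y, y <= t -> g y = c) -> derivable_pt_lim g t l -> l = 0.
Proof.
  intros Hg Hd. destruct (Req_dec l 0) as [|Hl]; auto. exfalso.
  destruct (Hd (Rabs l) (Rabs_pos_lt _ Hl)) as [del Hdel].
  assert (Hdp := cond_pos del).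
  specialize (Hdel (- (del / 2)) ltac:(lra)).
  rewrite Rabs_Ropp, Rabs_pos_eq in Hdel by lra.
  specialize (Hdel ltac:(lra)).
  rewrite (Hg (t + - (del/2))), (Hg t) in Hdel by lra.
  replace ((c - c) / - (del / 2) - l) with (- l) in Hdel by (field; lra).
  rewrite Rabs_Ropp in Hdel. lra.
Qed.

Lemma deriv_flat_right g t c l : (forall y, t <= y -> g y = c) -> derivable_pt_lim g t l -> l = 0.
Proof.
  intros Hg Hd. destruct (Req_dec l 0) as [|Hl]; auto. exfalso.
  destruct (Hd (Rabs l) (Rabs_pos_lt _ Hl)) as [del Hdel].
  assert (Hdp := cond_pos del).
  specialize (Hdel (del / 2) ltac:(lra)).
  rewrite Rabs_pos_eq in Hdel by lra.
  specialize (Hdel ltac:(lra)).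
  rewrite (Hg (t + del/2)), (Hg t) in Hdel by lra.
  replace ((c - c) / (del / 2) - l) with (- l) in Hdel by (field; lra).
  rewrite Rabs_Ropp in Hdel. lra.
Qed.

Lemma Dsig_left n t : t <= 0 -> Dsig n t = 0.
Proof.
  revert t. induction n; intros t Ht.
  - rewrite Dsig0. apply sig_zero; auto.
  - apply (deriv_flat_left (Dsig n) t 0). intros y Hy. apply IHn. lra. apply Dsig_d.
Qed.

Lemma Dsig_right n t : 1 <= t -> Dsig (S n) t = 0.
Proof.
  revert t. induction n; intros t Ht.
  - apply (deriv_flat_right (Dsig 0) t 1). intros y Hy. rewrite Dsig0. apply sig_one. lra. apply Dsig_d.
  - apply (deriv_flat_right (Dsig (S n)) t 0). intros y Hy. apply IHn. lra. apply Dsig_d.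
Qed.

Lemma Dsig_cont n x : continuity_pt (Dsig n) x.
Proof. apply derivable_continuous_pt. exists (Dsig (S n) x). apply Dsig_d. Qed.

Lemma Dsig_bound n : exists M, 0 <= M /\ forall t, Rabs (Dsig n t) <= M.
Proof.
  destruct (continuity_ab_maj (fun t => Rabs (Dsig n t)) 0 1 ltac:(lra)) as [Mx [HM _]].
  { intros c _. apply (continuity_pt_comp (Dsig n) Rabs). apply Dsig_cont. apply Rcontinuity_abs. }
  exists (Rmax 1 (Rabs (Dsig n Mx))). split. apply Rle_trans with 1; [lra|apply Rmax_l].
  intros t. destruct (Rle_dec t 0).
  - rewrite Dsig_left, Rabs_R0 by auto. apply Rle_trans with 1; [lra|apply Rmax_l].
  - destruct (Rle_dec 1 t).
    + destruct n. rewrite Dsig0, sig_one, Rabs_R1 by auto. apply Rmax_l.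
      rewrite Dsig_right, Rabs_R0 by auto. apply Rle_trans with 1; [lra|apply Rmax_l].
    + apply Rle_trans with (Rabs (Dsig n Mx)). apply (HM t). lra. apply Rmax_r.
Qed.
Definition hgt (k : nat) : R := (/2) ^ (S k).
Definition lam (k : nat) : R := INR (S k) * INR (S (S k)).

Fixpoint ps (x : R) (k : nat) : R :=
  match k with O => 0 | S k => ps x k + (if Rle_dec (ps x k + hgt k) x then hgt k else 0) end.
Definition bitb (x : R) (k : nat) : bool := if Rle_dec (ps x k + hgt k) x then true else false.
Definition bit (x : R) (k : nat) : R := if bitb x k then 1 else 0.

Lemma hgt_pos k : 0 < hgt k.
Proof. unfold hgt. apply pow_lt. lra. Qed.

Lemma ps_S x k : ps x (S k) = ps x k + bit x k * hgt k.
Proof. unfold bit, bitb. simpl. destruct (Rle_dec (ps x k + hgt k) x); ring. Qed.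

Lemma bit01 x k : 0 <= bit x k <= 1.
Proof. unfold bit. destruct (bitb x k); lra. Qed.

Lemma ps_inv x k : 0 <= x < 1 -> ps x k <= x < ps x k + (/2) ^ k.
Proof.
  intros Hx. induction k.
  - simpl. lra.
  - assert (E : hgt k = (/2)^k / 2) by (unfold hgt; simpl; field).
    assert (E2 : (/2)^(S k) = (/2)^k/2) by (simpl; field).
    rewrite ps_S, E2. unfold bit, bitb.
    destruct (Rle_dec (ps x k + hgt k) x); rewrite E in *; lra.
Qed.

Lemma ps_nonneg x k : 0 <= ps x k.
Proof. induction k. simpl; lra. rewrite ps_S. pose proof (bit01 x k). pose proof (hgt_pos k). nra. Qed.

Fixpoint fsum (g : nat -> R) (N : nat) : R :=
  match N with O => 0 | S N => fsum g N + g N end.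

Lemma fsum_ext g g' N : (forall k, (k < N)%nat -> g k = g' k) -> fsum g N = fsum g' N.
Proof. induction N; intros H; simpl; auto. rewrite IHN, H; auto. Qed.

Lemma fsum_stab g N0 M : (forall k, (N0 <= k)%nat -> g k = 0) -> (N0 <= M)%nat -> fsum g M = fsum g N0.
Proof.
  intros H HM. induction HM; auto. simpl. rewrite IHHM, H by lia. ring.
Qed.

Lemma fsum_eq2 g N0 N1 : (forall k, (N0 <= k)%nat -> g k = 0) -> (forall k, (N1 <= k)%nat -> g k = 0) ->
  fsum g N0 = fsum g N1.
Proof.
  intros H0 H1. rewrite <- (fsum_stab g N0 (Nat.max N0 N1)), <- (fsum_stab g N1 (Nat.max N0 N1)); auto; lia.
Qed.

Lemma fsum_le g g' N : (forall k, g k <= g' k) -> fsum g N <= fsum g' N.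
Proof. intros H. induction N; simpl. lra. specialize (H N). lra. Qed.

Lemma fsum_zero g N : (forall k, (k < N)%nat -> g k = 0) -> fsum g N = 0.
Proof. intros H. rewrite (fsum_ext g (fun _ => 0)) by auto. induction N; simpl; auto. rewrite IHN. ring.
  intros; auto. Qed.

Lemma fsum_deriv (g : nat -> R -> R) (g' : nat -> R) x N :
  (forall k, derivable_pt_lim (g k) x (g' k)) ->
  derivable_pt_lim (fun y => fsum (fun k => g k y) N) x (fsum g' N).
Proof.
  intros H. induction N; simpl. apply dpl_const. apply dpl_plus; auto.
Qed.

Definition cpos (k : nat) : R := - / INR (S k).
Definition arg (k : nat) (y : R) : R := lam k * y + INR k + 2.

Lemma arg_eq k y : arg k y = INR (S (S k)) * (INR (S k) * y + 1).
Proof. unfold arg, lam. rewrite !S_INR. ring. Qed.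

Lemma lam_pos k : 0 < lam k.
Proof. unfold lam. apply Rmult_lt_0_compat; apply lt_0_INR; lia. Qed.

Lemma arg_mono k y y' : y <= y' -> arg k y <= arg k y'.
Proof. intros. unfold arg. pose proof (lam_pos k). nra. Qed.

Lemma INR_S_pos k : 0 < INR (S k).
Proof. apply lt_0_INR; lia. Qed.

Lemma arg_neg k y : y < cpos k -> arg k y < 0.
Proof.
  intros H. rewrite arg_eq. unfold cpos in H. pose proof (INR_S_pos k). pose proof (INR_S_pos (S k)).
  assert (INR (S k) * y < -1).
  { apply Rmult_lt_compat_l with (r := INR (S k)) in H; auto.
    replace (INR (S k) * - / INR (S k)) with (-1) in H by (field; lra). lra. }
  nra.
Qed.

Lemma arg_ge1 k y : cpos (S k) <= y -> 1 <= arg k y.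
Proof.
  intros H. rewrite arg_eq. unfold cpos in H. pose proof (INR_S_pos k). pose proof (INR_S_pos (S k)).
  apply Rmult_le_compat_l with (r := INR (S (S k))) in H; [|lra].
  replace (INR (S (S k)) * - / INR (S (S k))) with (-1) in H by (field; lra).
  rewrite (S_INR (S k)) in *. nra.
Qed.

Lemma cpos_mono k k' : (k <= k')%nat -> cpos k <= cpos k'.
Proof.
  intros H. unfold cpos. apply Ropp_le_contravar. apply Rinv_le_contravar. apply INR_S_pos.
  apply le_INR; lia.
Qed.

Definition Nn (y : R) : nat := Z.to_nat (up (- / y)).

Lemma Nn_spec y : y < 0 -> - / y < INR (Nn y).
Proof.
  intros Hy. unfold Nn. destruct (archimed (- / y)) as [H1 H2].
  assert (Hp : 0 < - / y) by (apply Ropp_0_gt_lt_contravar, Rinv_lt_0_compat; auto).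
  assert (Hz : (0 <= up (- / y))%Z).
  { apply le_IZR. simpl. lra. }
  rewrite INR_IZR_INZ, Z2Nat.id by auto. lra.
Qed.

Lemma Nn_cpos y k : y < 0 -> (Nn y <= k)%nat -> y < cpos k.
Proof.
  intros Hy Hk. pose proof (Nn_spec y Hy). apply le_INR in Hk.
  unfold cpos. rewrite S_INR.
  assert (Hp : 0 < INR k + 1) by (pose proof (pos_INR k); lra).
  assert (- / y < INR k + 1) by lra.
  assert (Hq : 0 < - / y) by (apply Ropp_0_gt_lt_contravar, Rinv_lt_0_compat; auto).
  apply Rinv_lt_contravar in H0; [|nra].
  rewrite <- Ropp_inv_permute, Rinv_inv in H0 by (apply Rinv_neq_0_compat; lra). lra.
Qed.

Definition term (x : R) (n : nat) (y : R) (k : nat) : R :=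
  bit x k * hgt k * lam k ^ n * Dsig n (arg k y).

Definition T (x : R) (n : nat) (y : R) : R :=
  if Rlt_dec y 0 then fsum (term x n y) (Nn y) else match n with O => x | S _ => 0 end.

Lemma zero_beyond x n y y' k : y <= y' -> y' < 0 -> (Nn y' <= k)%nat -> term x n y k = 0.
Proof.
  intros H1 H2 H3. unfold term. rewrite Dsig_left. ring.
  pose proof (Nn_cpos y' k H2 H3). pose proof (arg_neg k y' H). pose proof (arg_mono k y y' H1). lra.
Qed.

Lemma T_local x n y0 y : y0 < 0 -> y < y0 / 2 -> T x n y = fsum (term x n y) (Nn (y0 / 2)).
Proof.
  intros H0 Hy. unfold T. destruct (Rlt_dec y 0); [|lra].
  apply fsum_eq2; intros k Hk. apply (zero_beyond x n y y k); auto; lra.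
  apply (zero_beyond x n y (y0/2) k); auto; lra.
Qed.

Lemma term_deriv x n k y0 : derivable_pt_lim (fun y => term x n y k) y0 (term x (S n) y0 k).
Proof.
  unfold term. eapply dpl_val. apply dpl_scal. apply dpl_comp with (l1 := lam k).
  eapply dpl_val. apply dpl_plus. apply dpl_plus. apply dpl_scal. apply dpl_id. apply dpl_const.
  apply dpl_const. ring. apply Dsig_d.
  change (lam k ^ S n) with (lam k * lam k ^ n). ring.
Qed.

Lemma T_deriv_neg x n y0 : y0 < 0 -> derivable_pt_lim (T x n) y0 (T x (S n) y0).
Proof.
  intros H0. rewrite (T_local x (S n) y0 y0) by lra.
  apply dpl_local with (fun y => fsum (fun k => term x n y k) (Nn (y0 / 2))).
  { exists (- y0 / 2). split. lra. intros y Hy. apply T_local; auto.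
    apply Rabs_def2 in Hy. lra. }
  apply fsum_deriv. intros k. apply term_deriv.
Qed.

Lemma T_deriv_pos x n y0 : 0 < y0 -> derivable_pt_lim (T x n) y0 (T x (S n) y0).
Proof.
  intros H0. unfold T at 2. destruct (Rlt_dec y0 0); [lra|].
  apply dpl_local with (fun _ => match n with O => x | S _ => 0 end).
  { exists y0. split. lra. intros y Hy. apply Rabs_def2 in Hy. unfold T.
    destruct (Rlt_dec y 0); [lra|auto]. }
  apply dpl_const.
Qed.
Lemma half_le_exp : /2 <= exp (- / 2).
Proof.
  assert (H1 : exp (/2) * exp (/2) = exp 1) by (rewrite <- exp_plus; f_equal; field).
  pose proof exp_le_3. pose proof (exp_pos (/2)).
  assert (exp (/2) < 2) by nra.
  rewrite exp_Ropp. apply Rinv_le_contravar; lra.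
Qed.

Lemma Jlemma p C eps : 0 <= C -> 0 < eps ->
  exists J, forall j, (J <= j)%nat -> C * INR (S (S j)) ^ p * (/2) ^ j < eps.
Proof.
  intros HC He.
  set (K := 8 * C * 2 ^ p * INR (S p) ^ (S p)).
  assert (HK : 0 <= K).
  { unfold K. apply Rmult_le_pos. apply Rmult_le_pos. lra. apply pow_le; lra.
    apply pow_le, pos_INR. }
  exists (Z.to_nat (up (K / eps))).
  intros j Hj.
  set (r := INR (S (S j))).
  assert (Hr : INR j < r) by (unfold r; rewrite !S_INR; lra).
  assert (HrJ : K / eps < r).
  { destruct (archimed (K / eps)) as [A1 A2].
    assert (0 <= K / eps) by (apply Rmult_le_pos; [lra| apply Rlt_le, Rinv_0_lt_compat; lra]).
    assert (Hz : (0 <= up (K / eps))%Z) by (apply le_IZR; simpl; lra).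
    apply le_INR in Hj. rewrite INR_IZR_INZ, Z2Nat.id in Hj by auto. lra. }
  assert (Hr0 : 0 < r) by (unfold r; apply INR_S_pos).
  assert (E1 : (/2) ^ j = 4 * (/2) ^ (S (S j))) by (simpl; field).
  assert (E2 : (/2) ^ (S (S j)) <= exp (- (r / 2))).
  { apply Rle_trans with (exp (- / 2) ^ (S (S j))).
    apply pow_incr. pose proof half_le_exp. lra.
    rewrite exp_pow_INR. fold r. right. f_equal. field. }
  pose proof (key_exp p (r / 2) ltac:(lra)) as E3.
  assert (E4 : r ^ p = 2 ^ p * (r / 2) ^ p).
  { rewrite <- Rpow_mult_distr. f_equal. field. }
  assert (Hq : 0 <= (r / 2) ^ p) by (apply pow_le; lra).
  assert (H2p : 0 < 2 ^ p) by (apply pow_lt; lra).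
  assert (E5 : C * r ^ p * (/2) ^ j <= 4 * C * 2 ^ p * ((r / 2) ^ p * exp (- (r / 2)))).
  { rewrite E1, E4. 
    assert (0 <= C * 2 ^ p * (r/2)^p) by (apply Rmult_le_pos; [apply Rmult_le_pos|]; lra).
    replace (C * (2 ^ p * (r / 2) ^ p) * (4 * (/ 2) ^ S (S j))) with
      (4 * (C * 2 ^ p * (r/2)^p) * (/ 2) ^ S (S j)) by ring.
    replace (4 * C * 2 ^ p * ((r / 2) ^ p * exp (- (r / 2)))) with
      (4 * (C * 2 ^ p * (r/2)^p) * exp (- (r / 2))) by ring.
    apply Rmult_le_compat_l. nra. auto. }
  assert (E6 : 4 * C * 2 ^ p * ((r / 2) ^ p * exp (- (r / 2))) <= K / r).
  { apply Rle_trans with (4 * C * 2 ^ p * (INR (S p) ^ S p / (r / 2))).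
    apply Rmult_le_compat_l. apply Rmult_le_pos; [|lra]. lra. auto.
    right. unfold K. field. lra. }
  assert (E7 : K / r < eps).
  { apply Rmult_lt_reg_r with r; auto. unfold Rdiv. rewrite Rmult_assoc, Rinv_l by lra.
    apply Rmult_lt_reg_r with (/ eps). apply Rinv_0_lt_compat; lra.
    replace (K * 1 * / eps) with (K / eps) by (unfold Rdiv; ring).
    replace (eps * r * / eps) with r by (field; lra). auto. }
  fold r. lra.
Qed.

Lemma active h : -1 <= h < 0 -> exists j, cpos j <= h < cpos (S j).
Proof.
  intros [H1 H2].
  assert (Hgen : forall N, h < cpos N -> exists j, cpos j <= h < cpos (S j)).
  { induction N; intros HN.
    - exfalso. replace (cpos 0) with (-1) in HN by (unfold cpos; simpl; field). lra.
    - destruct (Rlt_dec h (cpos N)). auto. exists N. lra. }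
  apply (Hgen (Nn h)). apply Nn_cpos; auto.
Qed.

Lemma T_active x n h j : h < 0 -> cpos j <= h < cpos (S j) ->
  T x n h = fsum (term x n h) j + term x n h j.
Proof.
  intros Hh [Hj1 Hj2]. unfold T. destruct (Rlt_dec h 0); [|lra].
  change (fsum (term x n h) j + term x n h j) with (fsum (term x n h) (S j)).
  apply fsum_eq2; intros k Hk.
  - apply zero_beyond with h; auto. lra.
  - unfold term. rewrite Dsig_left. ring. apply Rlt_le, arg_neg.
    apply Rlt_le_trans with (cpos (S j)); auto. apply cpos_mono; lia.
Qed.

Lemma fsum_ps x j : fsum (fun k => bit x k * hgt k) j = ps x j.
Proof. induction j; simpl; auto. rewrite IHj, <- ps_S. reflexivity. Qed.

Lemma below_arg k j h : (k < j)%nat -> cpos j <= h -> 1 <= arg k h.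
Proof. intros. apply arg_ge1. apply Rle_trans with (cpos j); auto. apply cpos_mono; lia. Qed.

Lemma fsum_below0 x h j : cpos j <= h -> fsum (term x 0 h) j = ps x j.
Proof.
  intros H. rewrite <- fsum_ps. apply fsum_ext. intros k Hk. unfold term.
  rewrite Dsig0, sig_one. simpl. ring. apply (below_arg k j); auto.
Qed.

Lemma fsum_belowS x n h j : cpos j <= h -> fsum (term x (S n) h) j = 0.
Proof.
  intros H. apply fsum_zero. intros k Hk. unfold term.
  rewrite Dsig_right. ring. apply (below_arg k j); auto.
Qed.

Lemma abs_div_bound A h r : h < 0 -> 0 < r -> / r <= - h -> Rabs (A / h) <= Rabs A * r.
Proof.
  intros Hh Hr Hrh. unfold Rdiv. rewrite Rabs_mult, Rabs_inv.
  rewrite (Rabs_left h) by auto.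
  apply Rmult_le_compat_l. apply Rabs_pos.
  assert (H : / (- h) <= / / r) by (apply Rinv_le_contravar; [apply Rinv_0_lt_compat; auto| auto]).
  rewrite Rinv_inv in H. exact H.
Qed.

Lemma T_deriv0 x n : 0 <= x < 1 -> derivable_pt_lim (T x n) 0 (T x (S n) 0).
Proof.
  intros Hx.
  assert (E0 : T x (S n) 0 = 0) by (unfold T; destruct (Rlt_dec 0 0); [lra|auto]).
  rewrite E0. intros eps Heps.
  destruct (Dsig_bound n) as [M [HM0 HM]].
  set (C := M + 1).
  destruct (Jlemma (2 * n + 1) C eps) as [J HJ]; [unfold C; lra|auto|].
  assert (HJp : 0 < INR J + 1) by (pose proof (pos_INR J); lra).
  assert (Hd : 0 < / (INR J + 1)) by (apply Rinv_0_lt_compat; lra).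
  assert (Hd1 : / (INR J + 1) <= 1).
  { replace 1 with (/1) at 2 by field. apply Rinv_le_contravar. lra. pose proof (pos_INR J); lra. }
  exists (mkposreal _ Hd). intros h Hh0 Hh. simpl in Hh.
  rewrite Rplus_0_l.
  destruct (Rlt_dec 0 h) as [Hp|Hnp].
  - assert (Tq : T x n h = T x n 0).
    { unfold T. destruct (Rlt_dec h 0); [lra|]. destruct (Rlt_dec 0 0); [lra|]. auto. }
    rewrite Tq. replace ((T x n 0 - T x n 0) / h - 0) with 0 by (field; lra).
    rewrite Rabs_R0; lra.
  - assert (Hneg : h < 0) by lra.
    rewrite Rabs_left in Hh by lra.
    assert (Hm1 : -1 <= h) by lra.
    destruct (active h ltac:(lra)) as [j [Hj1 Hj2]].
    assert (HjJ : (J <= j)%nat).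
    { destruct (le_lt_dec J j) as [|Hlt]; auto. exfalso.
      assert (cpos (S j) <= cpos J) by (apply cpos_mono; lia).
      unfold cpos at 2 in H. rewrite S_INR in H. lra. }
    specialize (HJ j HjJ).
    set (r := INR (S (S j))) in *.
    assert (Hr : 0 < r) by (unfold r; apply INR_S_pos).
    assert (Hrh : / r <= - h) by (unfold cpos in Hj2; fold r in Hj2; lra).
    assert (Hhalf : 0 < (/2) ^ j) by (apply pow_lt; lra).
    rewrite Rminus_0_r.
    destruct n as [|n].
    + assert (Tz : T x 0 0 = x) by (unfold T; destruct (Rlt_dec 0 0); [lra|auto]).
      rewrite Tz, (T_active x 0 h j Hneg (conj Hj1 Hj2)), (fsum_below0 x h j Hj1).
      pose proof (ps_inv x j Hx). pose proof (ps_inv x (S j) Hx). rewrite ps_S in H0.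
      assert (Ht : 0 <= term x 0 h j <= bit x j * hgt j).
      { unfold term. rewrite Dsig0, pow_O, Rmult_1_r. pose proof (sig_bounds (arg j h)).
        pose proof (bit01 x j). pose proof (hgt_pos j).
        set (s := sig (arg j h)) in *. set (b := bit x j) in *. set (g := hgt j) in *.
        assert (0 <= b * g) by nra. split; nra. }
      eapply Rle_lt_trans. apply (abs_div_bound _ h r); auto.
      apply Rle_lt_trans with ((/2) ^ j * r).
      apply Rmult_le_compat_r. lra. rewrite Rabs_left1 by lra. lra.
      eapply Rle_lt_trans; [|apply HJ]. replace (2 * 0 + 1)%nat with 1%nat by lia.
      rewrite pow_1. unfold C.
      assert (0 <= M * r * (/2)^j) by (apply Rmult_le_pos; [apply Rmult_le_pos|]; lra). nra.
    + assert (Tz : T x (S n) 0 = 0) by (unfold T; destruct (Rlt_dec 0 0); [lra|auto]).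
      rewrite Tz, (T_active x (S n) h j Hneg (conj Hj1 Hj2)), (fsum_belowS x n h j Hj1).
      rewrite Rplus_0_l, Rminus_0_r.
      eapply Rle_lt_trans. apply (abs_div_bound _ h r); auto.
      eapply Rle_lt_trans; [|apply HJ].
      assert (Hlam : lam j ^ S n <= r ^ (2 * S n)).
      { rewrite pow_mult. apply pow_incr. split. apply Rlt_le, lam_pos.
        unfold lam. fold r. replace (r ^ 2) with (r * r) by ring. apply Rmult_le_compat_r. lra.
        unfold r. apply le_INR; lia. }
      assert (Hhg : hgt j <= (/2) ^ j).
      { unfold hgt. simpl. pose proof (pow_lt (/2) j ltac:(lra)). lra. }
      unfold term. rewrite !Rabs_mult.
      pose proof (bit01 x j). rewrite (Rabs_pos_eq (bit x j)) by lra.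
      rewrite (Rabs_pos_eq (hgt j)) by (apply Rlt_le, hgt_pos).
      rewrite (Rabs_pos_eq (lam j ^ S n)) by (apply pow_le, Rlt_le, lam_pos).
      specialize (HM (arg j h)).
      assert (Hl0 : 0 <= lam j ^ S n) by (apply pow_le, Rlt_le, lam_pos).
      pose proof (hgt_pos j).
      replace (r ^ (2 * S n + 1)) with (r ^ (2 * S n) * r) by (rewrite pow_add; ring).
      assert (A1 : bit x j * hgt j * lam j ^ S n * Rabs (Dsig (S n) (arg j h)) <= (/2)^j * r ^ (2 * S n) * M).
      { apply Rle_trans with (hgt j * lam j ^ S n * M).
        - apply Rle_trans with (1 * hgt j * lam j ^ S n * Rabs (Dsig (S n) (arg j h))).
          + repeat apply Rmult_le_compat_r; try lra; try apply Rabs_pos.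
          + rewrite Rmult_1_l. apply Rmult_le_compat_l. nra. auto.
        - apply Rmult_le_compat_r; auto. apply Rmult_le_compat; try lra. }
      assert (0 <= r ^ (2 * S n)) by (apply pow_le; lra).
      apply Rle_trans with ((/2)^j * r ^ (2 * S n) * M * r).
      apply Rmult_le_compat_r; lra.
      assert (0 <= (/2)^j * r^(2*S n) * r).
      { apply Rmult_le_pos; [apply Rmult_le_pos|]; try lra. }
      set (P := (/2)^j * r^(2*S n) * r) in *.
      replace ((/2)^j * r ^ (2 * S n) * M * r) with (M * P) by (unfold P; ring).
      replace (C * (r ^ (2 * S n) * r) * (/ 2) ^ j) with (C * P) by (unfold P; ring).
      unfold C. nra.
Qed.
Lemma T_deriv x n y : 0 <= x < 1 -> derivable_pt_lim (T x n) y (T x (S n) y).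
Proof.
  intros Hx. destruct (Rlt_dec y 0). apply T_deriv_neg; auto.
  destruct (Rlt_dec 0 y). apply T_deriv_pos; auto.
  assert (y = 0) by lra. subst. apply T_deriv0; auto.
Qed.

Definition DU (x : R) (n : nat) (y : R) : R :=
  match n with O => y + T x 0 y | S O => 1 + T x 1 y | _ => T x n y end.

Lemma DU_d x n y : 0 <= x < 1 -> derivable_pt_lim (DU x n) y (DU x (S n) y).
Proof.
  intros Hx. destruct n as [|[|n]]; simpl.
  - apply dpl_plus. apply dpl_id. apply T_deriv; auto.
  - eapply dpl_val. apply dpl_plus. apply dpl_const. apply T_deriv; auto. ring.
  - apply T_deriv; auto.
Qed.

Definition uf (m x : R) (z : R) : R := m + (z - m) + T x 0 (z - m).

Definition Du (m x : R) (n : nat) (z : R) : R :=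
  (match n with O => m | _ => 0 end) + DU x n (z - m).

Lemma Du_d m x n z : 0 <= x < 1 -> derivable_pt_lim (Du m x n) z (Du m x (S n) z).
Proof.
  intros Hx. unfold Du at 2. eapply dpl_val. apply dpl_plus. apply dpl_const.
  apply dpl_comp with (l1 := 1). eapply dpl_val. apply dpl_plus. apply dpl_id. apply dpl_const. ring.
  apply DU_d; auto. ring.
Qed.

Lemma uf_smooth m x : 0 <= x < 1 -> smooth (uf m x).
Proof.
  intros Hx. exists (Du m x). split.
  - apply functional_extensionality. intros z. unfold Du, DU, uf. ring.
  - intros n z. apply Du_d; auto.
Qed.

Lemma term0_nonneg x y k : 0 <= term x 0 y k.
Proof.
  unfold term. rewrite Dsig0, pow_O, Rmult_1_r. pose proof (sig_bounds (arg k y)).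
  pose proof (bit01 x k). pose proof (hgt_pos k). apply Rmult_le_pos; [|lra]. nra.
Qed.

Lemma term0_le x y k : term x 0 y k <= bit x k * hgt k.
Proof.
  unfold term. rewrite Dsig0, pow_O, Rmult_1_r. pose proof (sig_bounds (arg k y)).
  pose proof (bit01 x k). pose proof (hgt_pos k).
  assert (0 <= bit x k * hgt k) by nra. nra.
Qed.

Lemma T0_bounds x y : 0 <= x < 1 -> 0 <= T x 0 y <= x.
Proof.
  intros Hx. unfold T. destruct (Rlt_dec y 0); [|lra]. split.
  - rewrite <- (fsum_zero (fun _ => 0) (Nn y)) by auto. apply fsum_le. intros; apply term0_nonneg.
  - apply Rle_trans with (fsum (fun k => bit x k * hgt k) (Nn y)).
    apply fsum_le. intros; apply term0_le. rewrite fsum_ps. apply ps_inv; auto.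
Qed.

Lemma T0_mono x y y' : 0 <= x < 1 -> y <= y' -> T x 0 y <= T x 0 y'.
Proof.
  intros Hx Hy. destruct (Rlt_dec y' 0).
  - unfold T. destruct (Rlt_dec y 0); [|lra]. destruct (Rlt_dec y' 0); [|lra].
    rewrite <- (fsum_stab (term x 0 y) (Nn y) (Nat.max (Nn y) (Nn y'))).
    rewrite <- (fsum_stab (term x 0 y') (Nn y') (Nat.max (Nn y) (Nn y'))).
    apply fsum_le. intros k. unfold term. rewrite Dsig0, pow_O, Rmult_1_r.
    apply Rmult_le_compat_l. pose proof (bit01 x k). pose proof (hgt_pos k). nra.
    apply sig_mono, arg_mono; auto.
    intros; apply zero_beyond with y'; auto; lra. lia.
    intros; apply zero_beyond with y; auto; lra. lia.
  - pose proof (T0_bounds x y Hx). unfold T at 2. destruct (Rlt_dec y' 0); lra.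
Qed.

Lemma uf_incr m x : 0 <= x < 1 -> strictly_increasing (uf m x).
Proof.
  intros Hx z z' H. unfold uf. pose proof (T0_mono x (z - m) (z' - m) Hx ltac:(lra)). lra.
Qed.

Lemma uf_cont m x w : 0 <= x < 1 -> continuity (fun z => uf m x z - w).
Proof.
  intros Hx z. apply derivable_continuous_pt. exists (Du m x 1 z + 0).
  apply dpl_plus. 2: apply dpl_const.
  assert (E : uf m x = Du m x 0) by (apply functional_extensionality; intros; unfold Du, DU, uf; ring).
  rewrite E. apply Du_d; auto.
Qed.

Lemma uf_bij m x : 0 <= x < 1 -> bijective_RR (uf m x).
Proof.
  intros Hx. split.
  - intros z z' H. destruct (Rtotal_order z z') as [Hl|[He|Hg]]; auto.
    pose proof (uf_incr m x Hx z z' Hl). lra.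
    pose proof (uf_incr m x Hx z' z Hg). lra.
  - intros w. destruct (IVT (fun z => uf m x z - w) (w - 2) (w + 1)) as [z [_ Hz]].
    apply uf_cont; auto. lra.
    + unfold uf. pose proof (T0_bounds x (w - 2 - m) Hx). lra.
    + unfold uf. pose proof (T0_bounds x (w + 1 - m) Hx). lra.
    + exists z. lra.
Qed.

Lemma uf_T3 m x : 0 <= x < 1 -> T3 (uf m x).
Proof. intros Hx. split. apply uf_smooth; auto. split. apply uf_incr; auto. apply uf_bij; auto. Qed.

Lemma uf_m m x : uf m x m = m + x.
Proof. unfold uf. replace (m - m) with 0 by ring. unfold T. destruct (Rlt_dec 0 0); [lra|]. ring. Qed.

Definition bval (l : list bool) (k : nat) : R := if nth k l false then 1 else 0.

Definition G (m : Z) (l : list bool) (z : R) : R :=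
  z + fsum (fun k => bval l k * hgt k * sig (arg k (z - IZR m))) (length l).

Definition prefix (x : R) (N : nat) : list bool := map (bitb x) (seq 0 N).

Lemma uf_below (m : Z) x z : z < IZR m -> uf (IZR m) x z = G m (prefix x (Nn (z - IZR m))) z.
Proof.
  intros Hz. unfold uf, G, T. destruct (Rlt_dec (z - IZR m) 0); [|lra].
  unfold prefix. rewrite length_map, length_seq.
  replace (IZR m + (z - IZR m)) with z by ring. f_equal.
  apply fsum_ext. intros k Hk. unfold term, bval, bit.
  rewrite Dsig0, pow_O, Rmult_1_r.
  rewrite nth_indep with (d' := bitb x 0) by (rewrite length_map, length_seq; auto).
  rewrite map_nth, seq_nth by auto. simpl. reflexivity.
Qed.
Lemma G_incr m l z z' : z < z' -> G m l z < G m l z'.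
Proof.
  intros H. unfold G.
  assert (fsum (fun k => bval l k * hgt k * sig (arg k (z - IZR m))) (length l) <=
          fsum (fun k => bval l k * hgt k * sig (arg k (z' - IZR m))) (length l)).
  { apply fsum_le. intros k. apply Rmult_le_compat_l.
    unfold bval. pose proof (hgt_pos k). destruct (nth k l false); nra.
    apply sig_mono, arg_mono. lra. }
  lra.
Qed.

Lemma G_inj m l z z' : G m l z = G m l z' -> z = z'.
Proof.
  intros H. destruct (Rtotal_order z z') as [Hl|[He|Hg]]; auto.
  pose proof (G_incr m l _ _ Hl). lra. pose proof (G_incr m l _ _ Hg). lra.
Qed.

Definition gen : Type := (Z * list bool * bool)%type.

Definition step (s : gen) (z w : R) : Prop :=
  match s with (m, l, d) => if d then w = G m l z else z = G m l w end.

Fixpoint path (z : R) (ls : list gen) (w : R) : Prop :=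
  match ls with nil => z = w | s :: ls' => exists y, step s z y /\ path y ls' w end.

Definition Erel (z w : R) : Prop := exists ls, path z ls w.

Lemma path_app z l1 y l2 w : path z l1 y -> path y l2 w -> path z (l1 ++ l2) w.
Proof.
  revert z. induction l1 as [|s l1 IH]; simpl; intros z H1 H2.
  - subst; auto.
  - destruct H1 as [y' [Hs Hp]]. exists y'. split; [auto|]. apply IH; auto.
Qed.

Definition flip (s : gen) : gen := match s with (m, l, d) => (m, l, negb d) end.

Lemma step_flip s z y : step s z y -> step (flip s) y z.
Proof. destruct s as [[m l] d]; destruct d; simpl; auto. Qed.

Lemma path_rev z l w : path z l w -> path w (rev (map flip l)) z.
Proof.
  revert z. induction l as [|s l IH]; simpl; intros z H.
  - auto.
  - destruct H as [y [Hs Hp]]. apply path_app with y. apply IH; auto.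
    simpl. exists z. split. apply step_flip; auto. reflexivity.
Qed.

Lemma step_det s z y y' : step s z y -> step s z y' -> y = y'.
Proof.
  destruct s as [[m l] d]; destruct d; simpl; intros H1 H2.
  - congruence.
  - apply (G_inj m l). congruence.
Qed.

Lemma path_det z l w w' : path z l w -> path z l w' -> w = w'.
Proof.
  revert z. induction l as [|s l IH]; simpl; intros z H1 H2.
  - congruence.
  - destruct H1 as [y [Hs Hp]]. destruct H2 as [y' [Hs' Hp']].
    assert (y = y') by (apply (step_det s z); auto). subst y'. apply (IH y); auto.
Qed.

Lemma Erel_refl z : Erel z z.
Proof. exists nil. reflexivity. Qed.
Lemma Erel_sym z w : Erel z w -> Erel w z.
Proof. intros [l H]. exists (rev (map flip l)). apply path_rev; auto. Qed.
Lemma Erel_trans z y w : Erel z y -> Erel y w -> Erel z w.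
Proof. intros [l1 H1] [l2 H2]. exists (l1 ++ l2). apply path_app with y; auto. Qed.

Definition ff (z : R) : R -> Prop := fun w => Erel z w.

Lemma f_G m l z : ff (G m l z) = ff z.
Proof.
  assert (H : Erel z (G m l z)).
  { exists ((m, l, true) :: nil). simpl. exists (G m l z). split; reflexivity. }
  unfold ff. apply functional_extensionality. intros w. apply propositional_extensionality.
  split; intros Hw.
  - apply Erel_trans with (G m l z); auto.
  - apply Erel_trans with z; auto. apply Erel_sym; auto.
Qed.

Lemma to_nat_inj p q : Cantor.to_nat p = Cantor.to_nat q -> p = q.
Proof. intros H. rewrite <- (Cantor.cancel_of_to p), <- (Cantor.cancel_of_to q), H. reflexivity. Qed.

Lemma pair_inj a b c d : Cantor.to_nat (a, b) = Cantor.to_nat (c, d) -> a = c /\ b = d.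
Proof. intros H. assert (E := to_nat_inj _ _ H). split; congruence. Qed.

Definition encZ (z : Z) : nat := Cantor.to_nat (Z.to_nat z, Z.to_nat (- z)).
Lemma encZ_inj a b : encZ a = encZ b -> a = b.
Proof. unfold encZ. intros H. apply pair_inj in H. lia. Qed.

Fixpoint encL (l : list bool) : nat :=
  match l with nil => 0 | b :: l => S (Cantor.to_nat (if b then 1 else 0, encL l)) end%nat.
Lemma encL_inj l1 l2 : encL l1 = encL l2 -> l1 = l2.
Proof.
  revert l2. induction l1 as [|b l1 IH]; intros [|b' l2]; cbn [encL]; intros H; try discriminate; auto.
  apply eq_add_S in H. apply pair_inj in H. destruct H as [H2 H1].
  f_equal. destruct b, b'; simpl in *; auto; discriminate. apply IH; auto.
Qed.

Definition encG (s : gen) : nat :=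
  match s with (m, l, d) => Cantor.to_nat (encZ m, Cantor.to_nat (encL l, if d then 1 else 0)) end%nat.
Lemma encG_inj s1 s2 : encG s1 = encG s2 -> s1 = s2.
Proof.
  destruct s1 as [[m1 l1] d1], s2 as [[m2 l2] d2]. unfold encG. intros H.
  apply pair_inj in H. destruct H as [H2 H1]. apply pair_inj in H1. destruct H1 as [H4 H3].
  apply encZ_inj in H2. apply encL_inj in H4. subst. f_equal. destruct d1, d2; simpl in *; auto; discriminate.
Qed.

Fixpoint encP (ls : list gen) : nat :=
  match ls with nil => 0 | s :: ls => S (Cantor.to_nat (encG s, encP ls)) end%nat.
Lemma encP_inj l1 l2 : encP l1 = encP l2 -> l1 = l2.
Proof.
  revert l2. induction l1 as [|s l1 IH]; intros [|s' l2]; cbn [encP]; intros H; try discriminate; auto.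
  apply eq_add_S in H. apply pair_inj in H. destruct H as [H2 H1].
  f_equal. apply encG_inj; auto. apply IH; auto.
Qed.

Theorem theorem3 :
  exists (S : Type) (f : R -> S),
    forall P : (R -> S) -> (R -> S),
      predictor P -> anonymous T3 P ->
      countable_set (fun x : R => P f x = f x).
Proof.
  exists (R -> Prop), ff. intros P HP HA.
  assert (Key : forall (m : Z) a, IZR m <= a < IZR m + 1 -> P ff a = P ff (IZR m)).
  { intros m a Ha. set (x := a - IZR m). assert (Hx : 0 <= x < 1) by (unfold x; lra).
    pose proof (HA ff (uf (IZR m) x) (uf_T3 (IZR m) x Hx)) as H1.
    assert (H2 : P (fun z => ff (uf (IZR m) x z)) (IZR m) = P ff (IZR m)).
    { apply HP. intros y Hy. rewrite uf_below by auto. apply f_G. }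
    rewrite H1 in H2. cbv beta in H2. rewrite uf_m in H2.
    replace (IZR m + x) with a in H2 by (unfold x; ring). exact H2. }
  set (mZ := fun a : R => (up a - 1)%Z).
  assert (HmZ : forall a, IZR (mZ a) <= a < IZR (mZ a) + 1).
  { intros a. unfold mZ. rewrite minus_IZR. destruct (archimed a). simpl. lra. }
  set (A := fun a => P ff a = ff a).
  set (rep := fun m : Z => epsilon (inhabits 0) (fun a => A a /\ mZ a = m)).
  assert (Hrep : forall a, A a -> A (rep (mZ a)) /\ mZ (rep (mZ a)) = mZ a).
  { intros a Ha. unfold rep. apply (epsilon_spec (inhabits 0) (fun b => A b /\ mZ b = mZ a)).
    exists a. auto. }
  assert (HE : forall a, A a -> Erel (rep (mZ a)) a).
  { intros a Ha. destruct (Hrep a Ha) as [Hr Hm].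
    assert (Hf : ff (rep (mZ a)) = ff a).
    { unfold A in Hr, Ha. rewrite <- Hr, <- Ha.
      rewrite (Key (mZ a) a (HmZ a)).
      rewrite (Key (mZ (rep (mZ a))) (rep (mZ a)) (HmZ _)). rewrite Hm. reflexivity. }
    assert (H : ff (rep (mZ a)) a) by (rewrite Hf; apply Erel_refl). exact H. }
  set (ch := fun a => epsilon (inhabits nil) (fun l => path (rep (mZ a)) l a)).
  assert (Hch : forall a, A a -> path (rep (mZ a)) (ch a) a).
  { intros a Ha. unfold ch. apply (epsilon_spec (inhabits nil) (fun l => path (rep (mZ a)) l a)).
    apply HE; auto. }
  exists (fun a => Cantor.to_nat (encZ (mZ a), encP (ch a))).
  intros a b Ha Hb Hab. apply pair_inj in Hab. destruct Hab as [H2 H1].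
  apply encZ_inj in H2. apply encP_inj in H1.
  pose proof (Hch a Ha). pose proof (Hch b Hb).
  rewrite H2, H1 in H. apply (path_det _ _ _ _ H H0).
Qed.
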